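(* Let $N$ be a nonnegative integer and let $a,b,d,f\in\mathbb{C}$ be such that every hypergeometric series below is well defined (no lower parameter is a nonpositive integer) and the denominator $f(a-f)-db$ is nonzero. Put $$g=\frac{f(b+d-a)(f-a)}{f(a-f)-db}.$$ Then $$ {}_{7}F_{6}\left[\begin{matrix} a,\ 1+\frac{a}{2},\ b,\ a-f+1,\ d,\ f+1,\ -N\\ \frac{a}{2},\ 1+a-b,\ f,\ 1+a-d,\ a-f,\ 1+a+N\end{matrix};1\right]=\frac{(1+a)_N\,(a-b-d)_N}{(1+a-b)_N\,(1+a-d)_N}\cdot\frac{(g+1)_N}{(g)_N}.$$
   Context: $(x)_n$ denotes the Pochhammer symbol: $(x)_0=1$, $(x)_n=x(x+1)\cdots(x+n-1)$ for $n\ge1$. The generalized hypergeometric function is $${}_{r+1}F_{r}\left[\begin{matrix} a_1,\dots,a_{r+1}\\ b_1,\dots,b_r\end{matrix};z\right]=\sum_{n=0}^{\infty}\frac{(a_1)_n\cdots(a_{r+1})_n}{(b_1)_n\cdots(b_r)_n\,n!}z^n ,$$ where no $b_i$ is a nonpositive integer; when one upper parameter equals $-N$ with $N$ a nonnegative integer the series terminates. *)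

(* Defs.v *)
From HB Require Import structures.
From mathcomp Require Import all_boot all_order all_algebra.
From mathcomp Require Import complex.
From mathcomp Require Import reals.
Set Implicit Arguments. Unset Strict Implicit. Unset Printing Implicit Defensive.
Import Order.TTheory GRing.Theory Num.Theory.
Local Open Scope ring_scope.

Definition poch (C : comRingType) (x : C) (n : nat) : C :=
  \prod_(i < n) (x + i%:R).

Definition nonpos_int (C : ringType) (x : C) : Prop :=
  exists k : nat, x = - k%:R.

Definition hyp_term (C : fieldType) (us ls : seq C) (z : C) (n : nat) : C :=
  (\prod_(u <- us) poch u n) / ((\prod_(l <- ls) poch l n) * n`!%:R) * z ^+ n.

(* The hypergeometric series with an upper parameter -N terminates:
   all terms with index n > N vanish since (-N)_n = 0.  We therefore
   represent it by its partial sum over 0 <= n <= N. *)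
Definition hyp_terminating (C : fieldType) (us ls : seq C) (z : C) (N : nat) : C :=
  \sum_(n < N.+1) hyp_term us ls z n.

(* Main.v *)
Require Import Defs.
From HB Require Import structures.
From mathcomp Require Import all_boot all_order all_algebra.
From mathcomp Require Import complex.
From mathcomp Require Import reals.
From mathcomp Require Import ring.
Import Order.TTheory GRing.Theory Num.Theory.
Local Open Scope ring_scope.

Module Helpers.
Set Implicit Arguments. Unset Strict Implicit.


Lemma pochS (C : numFieldType) (x : C) n : poch x n.+1 = poch x n * (x + n%:R).
Proof. by rewrite /poch big_ord_recr. Qed.

Lemma pochSl (C : numFieldType) (x : C) n : poch x n.+1 = x * poch (x + 1) n.
Proof.
rewrite /poch big_ord_recl addr0; congr (_ * _); apply: eq_bigr => i _.
by rewrite lift0 -addn1 natrD; ring.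
Qed.

Lemma poch0 (C : numFieldType) (x : C) : poch x 0 = 1.
Proof. by rewrite /poch big_ord0. Qed.

Lemma poch_neq0 (C : numFieldType) (x : C) n :
  (forall k : nat, x + k%:R != 0) -> poch x n != 0.
Proof.
move=> h; elim: n => [|n IH]; first by rewrite poch0 oner_neq0.
by rewrite pochS mulf_neq0.
Qed.

Lemma npi (C : numFieldType) (x : C) : ~ nonpos_int x -> forall k : nat, x + k%:R != 0.
Proof.
move=> h k; apply/eqP => e; apply: h; exists k.
by apply/eqP; rewrite -subr_eq0 opprK e.
Qed.

Lemma pochS1 (C : numFieldType) (x : C) n : x != 0 -> poch (x + 1) n = poch x n * (x + n%:R) / x.
Proof.
move=> hx; rewrite -pochS pochSl. field. exact hx.
Qed.



Definition T5 (C : numFieldType) (a b d : C) (N k : nat) : C :=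
  poch a k * ((a + 2 * k%:R) / a * poch b k * poch d k * poch (- N%:R) k /
   (k`!%:R * poch (1 + a - b) k * poch (1 + a - d) k * poch (1 + a + N%:R) k)).
Definition Xt (C : numFieldType) (a b d : C) (N k : nat) : C :=
  k%:R * (T5 a b d N k * (a + k%:R)).
Definition U5 (C : numFieldType) (a b d : C) (N m : nat) : C :=
  poch a m.+1 * poch b m.+1 * poch d m.+1 * poch (- N%:R) m.+1 /
  (a * m`!%:R * poch (1+a-b) m * poch (1+a-d) m * poch (1+a+N%:R) m).

Lemma fact_neq0 (C : numFieldType) m : (m`!%:R : C) != 0.
Proof. by rewrite pnatr_eq0 -lt0n fact_gt0. Qed.

Lemma natS_neq0 (C : numFieldType) m : (1 + m%:R : C) != 0.
Proof. by rewrite nat1r pnatr_eq0. Qed.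

Lemma tele (C : numFieldType) (a b d : C) (N m : nat) :
  a != 0 -> (forall k : nat, 1 + a - b + k%:R != 0) ->
  (forall k : nat, 1 + a - d + k%:R != 0) ->
  (forall k : nat, 1 + a + N%:R + k%:R != 0) ->
  \sum_(k < m.+1) (b * d * N%:R * T5 a b d N k + (a - b - d + N%:R) * Xt a b d N k)
  = - U5 a b d N m.
Proof.
move=> ha hb hd hN.
have pb := poch_neq0 m hb; have pd := poch_neq0 m hd; have pN := poch_neq0 m hN.
have fm := fact_neq0 C m.
elim: m pb pd pN fm => [|m IH] pb pd pN fm.
  rewrite big_ord_recr big_ord0 /= /Xt /T5 /U5 !poch0 !pochS !poch0.
  move: (hb 0%N) (hd 0%N) (hN 0%N); rewrite !addr0 => h1 h2 h3.
  rewrite /=. field. by rewrite fm ha.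
rewrite big_ord_recr /= IH; last first.
- exact: fact_neq0.
- exact: poch_neq0.
- exact: poch_neq0.
- exact: poch_neq0.
rewrite /Xt /T5 /U5 !pochS !factS !natrM.
move: (hb m) (hd m) (hN m) (hb m.+1) (hd m.+1) (hN m.+1) => h1 h2 h3 h4 h5 h6.
field.
by rewrite h1 h2 h3 ha !poch_neq0 ?fact_neq0 ?natS_neq0.
Qed.



Lemma U5N (C : numFieldType) (a b d : C) N : U5 a b d N N = 0.
Proof. by rewrite /U5 [poch (- _) _]pochS addNr !mulr0 !mul0r. Qed.

Lemma hyp1 (C : numFieldType) (x : C) :
  (forall k : nat, x + k%:R != 0) -> forall k : nat, x + 1 + k%:R != 0.
Proof. by move=> h k; have -> : x + 1 + k%:R = x + k.+1%:R by rewrite -addn1 natrD; ring. Qed.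

Definition Ksh (C : numFieldType) (a b d : C) (M : nat) : C :=
  (a + 1) * (a + 2) * b * d * (- M.+1%:R) / ((1 + a - b) * (1 + a - d) * (1 + a + M.+1%:R)).

Lemma shift (C : numFieldType) (a b d : C) (M j : nat) :
  (forall k : nat, a + 2 * k%:R != 0) -> (forall k : nat, 1 + a - b + k%:R != 0) ->
  (forall k : nat, 1 + a - d + k%:R != 0) ->
  (forall k : nat, 1 + a + M.+1%:R + k%:R != 0) ->
  Xt a b d M.+1 j.+1 = Ksh a b d M * T5 (a + 2) (b + 1) (d + 1) M j.
Proof.
move=> ha hb hd hN.
rewrite /Xt /T5 [poch a _ * _ * _]mulrAC -pochS !pochSl.
have -> : 1 + (a + 2) - (b + 1) = 1 + a - b + 1 by ring.
have -> : 1 + (a + 2) - (d + 1) = 1 + a - d + 1 by ring.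
have -> : 1 + (a + 2) + M%:R = 1 + a + M.+1%:R + 1 by rewrite -addn1 natrD; ring.
have -> : - M%:R = - M.+1%:R + 1 :> C by rewrite -addn1 natrD; ring.
have -> : a + 2 = a + 1 + 1 by ring.
rewrite /Ksh factS natrM.
have h1 : a + 1 + 1 != 0 by have -> : a + 1 + 1 = a + 2 * 1%:R by ring. 
have h2 : 1 + a + (1 + M%:R) != 0.
  by have -> : 1 + a + (1 + M%:R) = 1 + a + M.+1%:R + 0%:R by rewrite -addn1 natrD; ring.
move: (hb 0%N) (hd 0%N); rewrite !addr0 => h3 h4.
have h5 : a != 0 by move: (ha 0%N); rewrite mulr0 addr0.
field.
by rewrite h1 h2 h3 h4 h5 !poch_neq0 ?fact_neq0 ?natS_neq0 //; apply: hyp1.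
Qed.



Definition F5 (C : numFieldType) (a b d : C) (N : nat) : C := \sum_(k < N.+1) T5 a b d N k.
Definition Dg (C : numFieldType) (a b d : C) (N : nat) : C :=
  poch (1 + a) N * poch (1 + a - b - d) N / (poch (1 + a - b) N * poch (1 + a - d) N).

Lemma F5_b0 (C : numFieldType) (a d : C) N : a != 0 -> F5 a 0 d N = 1.
Proof.
move=> ha; rewrite /F5 big_ord_recl big1 ?addr0.
  by rewrite /T5 !poch0 /= fact0; field; exact: ha.
by move=> j _; rewrite lift0 /T5 [poch 0 _]pochSl !(mul0r, mulr0).
Qed.

Lemma F5_d0 (C : numFieldType) (a b : C) N : a != 0 -> F5 a b 0 N = 1.
Proof.
move=> ha; rewrite /F5 big_ord_recl big1 ?addr0.
  by rewrite /T5 !poch0 /= fact0; field; exact: ha.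
by move=> j _; rewrite lift0 /T5 [poch 0 _]pochSl !(mul0r, mulr0).
Qed.

Lemma natS (C : numFieldType) n : (n.+1%:R : C) = n%:R + 1.
Proof. by rewrite -addn1 natrD. Qed.

Lemma dougall (C : numFieldType) (M : nat) : forall (a b d : C),
  (forall k : nat, a + 2 * k%:R != 0) -> (forall k : nat, 1 + a - b + k%:R != 0) ->
  (forall k : nat, 1 + a - d + k%:R != 0) ->
  (forall k : nat, 1 + a + M%:R + k%:R != 0) ->
  F5 a b d M = Dg a b d M.
Proof.
elim: M => [|M IH] a b d ha hb hd hN.
  have a0 : a != 0 by move: (ha 0%N); rewrite mulr0 addr0.
  rewrite /F5 /Dg big_ord_recr big_ord0 /T5 !poch0 /= fact0.
  by field; exact: a0.
have a0 : a != 0 by move: (ha 0%N); rewrite mulr0 addr0.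
have tl := tele M.+1 a0 hb hd hN.
rewrite U5N oppr0 big_split /= -!big_distrr /= -/(F5 a b d M.+1) big_ord_recl /= in tl.
rewrite {1}/Xt /= mul0r add0r in tl.
have E : forall j : 'I_M.+1, Xt a b d M.+1 (lift ord0 j) = Ksh a b d M * T5 (a + 2) (b + 1) (d + 1) M j.
  by move=> j; rewrite lift0 shift.
rewrite (eq_bigr _ (fun j _ => E j)) -big_distrr /= in tl.
rewrite -/(F5 (a + 2) (b + 1) (d + 1) M) IH in tl; first last.
- move=> k; have -> : 1 + (a + 2) + M%:R + k%:R = 1 + a + M.+1%:R + k.+1%:R.
    by rewrite !natS; ring.
  exact: hN.
- move=> k; have -> : 1 + (a + 2) - (d + 1) + k%:R = 1 + a - d + k.+1%:R.
    by rewrite !natS; ring.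
  exact: hd.
- move=> k; have -> : 1 + (a + 2) - (b + 1) + k%:R = 1 + a - b + k.+1%:R.
    by rewrite !natS; ring.
  exact: hb.
- move=> k; have -> : a + 2 + 2 * k%:R = a + 2 * k.+1%:R.
    by rewrite !natS; ring.
  exact: ha.
have a2 : a + 2 != 0 by have -> : a + 2 = a + 2 * 1%:R by ring.
move: (hb 0%N) (hd 0%N) (hN 0%N); rewrite !addr0 => hb0 hd0 hN0.
have [bd0|bd0] := eqVneq (b * d) 0.
  move/eqP: bd0; rewrite mulf_eq0 => /orP[] /eqP b0.
    rewrite b0 F5_b0 // /Dg !subr0.
    move: hb; rewrite b0 subr0 => hb'.
    by field; rewrite !poch_neq0.
  rewrite b0 F5_d0 // /Dg !subr0.
  move: hd; rewrite b0 subr0 => hd'.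
  by field; rewrite !poch_neq0.
have nz : b * d * M.+1%:R != 0 by rewrite mulf_neq0 // pnatr_eq0.
apply: (mulfI nz); move/eqP: tl; rewrite addr_eq0 => /eqP ->.
rewrite /Dg /Ksh [poch (1 + a - b - d) _]pochS !pochSl.
have -> : 1 + (a + 2) - (b + 1) - (d + 1) = 1 + a - b - d by ring.
have -> : 1 + (a + 2) - (b + 1) = 1 + a - b + 1 by ring.
have -> : 1 + (a + 2) - (d + 1) = 1 + a - d + 1 by ring.
have -> : 1 + (a + 2) = a + 2 + 1 by ring.
rewrite pochS1 //.
have -> : 1 + a + 1 = a + 2 by ring.
have h2 : 1 + a + (1 + M%:R) != 0 by have -> : 1 + a + (1 + M%:R) = 1 + a + M.+1%:R by rewrite natS; ring.
field.
by rewrite hd0 hb0 a2 h2 !poch_neq0 //; apply: hyp1.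
Qed.



Lemma term_eq (C : numFieldType) (a b d f : C) (N n : nat) :
  (forall k : nat, a / 2 + k%:R != 0) -> (forall k : nat, 1 + a - b + k%:R != 0) ->
  (forall k : nat, f + k%:R != 0) -> (forall k : nat, 1 + a - d + k%:R != 0) ->
  (forall k : nat, a - f + k%:R != 0) -> (forall k : nat, 1 + a + N%:R + k%:R != 0) ->
  hyp_term [:: a; 1 + a / 2; b; a - f + 1; d; f + 1; - N%:R]
    [:: a / 2; 1 + a - b; f; 1 + a - d; a - f; 1 + a + N%:R] 1 n
  = T5 a b d N n + Xt a b d N n / (f * (a - f)).
Proof.
move=> ha hb hf hd haf hN.
have a20 : a / 2 != 0 by move: (ha 0%N); rewrite addr0.
have f0 : f != 0 by move: (hf 0%N); rewrite addr0.
have af0 : a - f != 0 by move: (haf 0%N); rewrite addr0.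
have two : (2 : C) != 0 by rewrite pnatr_eq0.
have a0 : a != 0 by move: a20; apply: contra => /eqP ->; rewrite mul0r.
rewrite /hyp_term !big_cons big_nil expr1n mulr1 /Xt /T5 (addrC 1 (a / 2)).
rewrite (pochS1 _ a20) (pochS1 _ f0) (pochS1 _ af0).
field.
by rewrite ?a0 ?two ?f0 ?af0 ?a20 ?poch_neq0 ?fact_neq0.
Qed.

Lemma main_gen (C : numFieldType) (N : nat) (a b d f : C)
  (ha2 : ~ nonpos_int (a / 2))
  (hb : ~ nonpos_int (1 + a - b))
  (hf : ~ nonpos_int f)
  (hd : ~ nonpos_int (1 + a - d))
  (haf : ~ nonpos_int (a - f))
  (haN : ~ nonpos_int (1 + a + N%:R))
  (hden : f * (a - f) - d * b != 0)
  (hg : poch (f * (b + d - a) * (f - a) / (f * (a - f) - d * b)) N != 0) :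
  let g := f * (b + d - a) * (f - a) / (f * (a - f) - d * b) in
  hyp_terminating
    [:: a; 1 + a / 2; b; a - f + 1; d; f + 1; - N%:R]
    [:: a / 2; 1 + a - b; f; 1 + a - d; a - f; 1 + a + N%:R] 1 N
  = (poch (1 + a) N * poch (a - b - d) N) / (poch (1 + a - b) N * poch (1 + a - d) N)
    * (poch (g + 1) N / poch g N).
Proof.
move=> g.
move/npi: ha2 => ha2; move/npi: hb => hb; move/npi: hf => hf; move/npi: hd => hd.
move/npi: haf => haf; move/npi: haN => haN.
have two : (2 : C) != 0 by rewrite pnatr_eq0.
have ha : forall k : nat, a + 2 * k%:R != 0.
  move=> k; have -> : a + 2 * k%:R = 2 * (a / 2 + k%:R) by field.
  by rewrite mulf_neq0.
rewrite /hyp_terminating (eq_bigr _ (fun (n : 'I_N.+1) _ => term_eq n ha2 hb hf hd haf haN)).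
rewrite big_split /= -big_distrl /= -/(F5 a b d N) dougall //.
case: N haN hg ha => [|M] haN hg ha.
  by rewrite big_ord_recr big_ord0 /Xt /= /Dg !poch0 !(mul0r, add0r, addr0, mulr1, divr1).
rewrite big_ord_recl /= {1}/Xt mul0r add0r.
have E : forall j : 'I_M.+1, Xt a b d M.+1 (lift ord0 j) = Ksh a b d M * T5 (a + 2) (b + 1) (d + 1) M j.
  by move=> j; rewrite lift0 shift.
rewrite (eq_bigr _ (fun j _ => E j)) -big_distrr /=.
rewrite -/(F5 (a + 2) (b + 1) (d + 1) M) dougall; first last.
- move=> k; have -> : 1 + (a + 2) + M%:R + k%:R = 1 + a + M.+1%:R + k.+1%:R.
    by rewrite !natS; ring.
  exact: haN.
- move=> k; have -> : 1 + (a + 2) - (d + 1) + k%:R = 1 + a - d + k.+1%:R.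
    by rewrite !natS; ring.
  exact: hd.
- move=> k; have -> : 1 + (a + 2) - (b + 1) + k%:R = 1 + a - b + k.+1%:R.
    by rewrite !natS; ring.
  exact: hb.
- move=> k; have -> : a + 2 + 2 * k%:R = a + 2 * k.+1%:R.
    by rewrite !natS; ring.
  exact: ha.
have a2 : a + 2 != 0 by have -> : a + 2 = a + 2 * 1%:R by ring.
move: (hb 0%N) (hd 0%N) (haN 0%N) (hf 0%N) (haf 0%N); rewrite !addr0 => hb0 hd0 hN0 hf0 haf0.
have h2 : 1 + a + (1 + M%:R) != 0.
  by have -> : 1 + a + (1 + M%:R) = 1 + a + M.+1%:R by rewrite natS; ring.
rewrite [poch g _]pochSl in hg *.
rewrite [poch (g + 1) M.+1]pochS.
have g0 : g != 0 by move: hg; rewrite mulf_eq0 negb_or => /andP[].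
have pg1 : poch (g + 1) M != 0 by move: hg; rewrite mulf_eq0 negb_or => /andP[].
rewrite /Dg /Ksh [poch (1 + a - b - d) _]pochS !pochSl.
have -> : 1 + (a + 2) - (b + 1) - (d + 1) = 1 + a - b - d by ring.
have -> : 1 + (a + 2) - (b + 1) = 1 + a - b + 1 by ring.
have -> : 1 + (a + 2) - (d + 1) = 1 + a - d + 1 by ring.
have -> : 1 + (a + 2) = a + 2 + 1 by ring.
rewrite (pochS1 M a2).
have -> : 1 + a + 1 = a + 2 by ring.
have -> : a - b - d + 1 = 1 + a - b - d by ring.
move: g0; rewrite /g => g0.
have [n1 n2] : f * (b + d - a) * (f - a) != 0 /\ f * (a - f) - d * b != 0.
  by move: g0; rewrite mulf_eq0 negb_or => /andP[].
move: n1; rewrite !mulf_eq0 !negb_or => /andP[/andP[nf nbd] nfa].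
move: pg1; rewrite /g => pg1.
have afn : a - f != 0 by [].
field.
by rewrite hden pg1 nfa nbd nf hd0 hb0 afn a2 h2 !poch_neq0 //; apply: hyp1.
Qed.


End Helpers.
Import Helpers.

Local Open Scope complex_scope.

Theorem mainTheorem1 (R : realType) (N : nat) (a b d f : R[i])
  (ha2 : ~ nonpos_int (a / 2))
  (hb : ~ nonpos_int (1 + a - b))
  (hf : ~ nonpos_int f)
  (hd : ~ nonpos_int (1 + a - d))
  (haf : ~ nonpos_int (a - f))
  (haN : ~ nonpos_int (1 + a + N%:R))
  (hden : f * (a - f) - d * b != 0)
  (hg : poch (f * (b + d - a) * (f - a) / (f * (a - f) - d * b)) N != 0) :
  let g := f * (b + d - a) * (f - a) / (f * (a - f) - d * b) in
  hyp_terminating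
    [:: a; 1 + a / 2; b; a - f + 1; d; f + 1; - N%:R]
    [:: a / 2; 1 + a - b; f; 1 + a - d; a - f; 1 + a + N%:R] 1 N
  = (poch (1 + a) N * poch (a - b - d) N) / (poch (1 + a - b) N * poch (1 + a - d) N)
    * (poch (g + 1) N / poch g N).
Proof.
exact: (@main_gen _ N a b d f ha2 hb hf hd haf haN hden hg).
Qed.
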